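(* Let $(\mathcal H,\|\cdot\|)$ be a Hilbert space and $q$ a (not necessarily positive) quadratic form, semi-bounded from below, with domain $\mathcal D$ dense in $\mathcal H$ and with discrete spectrum $\nu_1\le\nu_2\le\dots$ (repeated according to multiplicity), and let $\{g_i\}_{i\ge1}$ be an orthonormal basis of $\mathcal H$ of eigenvectors of $q$, $g_i$ associated with $\nu_i$. Let $N,m$ be positive integers, $F$ an $m$-dimensional subspace of $\mathcal D$, and $\xi^F_1\le\dots\le\xi^F_m$ the eigenvalues of the restriction of $q$ to $F$ (with respect to the inner product of $\mathcal H$). Assume there exist constants $\gamma,\delta>0$ such that: (H1) $0<\delta<\gamma/\sqrt2$; (H2) $|\nu_{N+i-1}|\le\gamma$ for all $i\in\{1,\dots,m\}$, $\nu_{N+m}\ge\gamma$ and, if $N\ge2$, $\nu_{N-1}\le-\gamma$; (H3) $|q(\varphi,g)|\le\delta\|\varphi\|\,\|g\|$ for all $g\in\mathcal D$ and $\varphi\in F$ (where $q(\cdot,\cdot)$ is the associated symmetric bilinear form). Then: (i) $|\nu_{N+i-1}-\xi_i^F|\le\frac4\gamma\delta^2$ for all $i=1,\dots,m$; (ii) $\|\Pi_N-\mathbb I\|_{\mathcal L(F,\mathcal H)}\le\sqrt2\,\delta/\gamma$, where $\Pi_N$ is the orthogonal projection onto $\mathrm{span}\{g_N,\dots,g_{N+m-1}\}$. *)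

(* Defs.v *)
From HB Require Import structures.
From mathcomp Require Import all_boot all_order all_algebra.
From mathcomp Require Import reals.

Set Implicit Arguments.
Unset Strict Implicit.
Unset Printing Implicit Defensive.

Import Order.TTheory GRing.Theory Num.Theory.
Local Open Scope ring_scope.

Section HilbertDefs.
Context {R : realType} {V : lmodType R}.

Definition inner_product (ip : V -> V -> R) : Prop :=
  [/\ forall x y, ip x y = ip y x,
      forall a x y z, ip (a *: x + y) z = a * ip x z + ip y z &
      forall x, x != 0 -> 0 < ip x x].

Definition hnorm (ip : V -> V -> R) (x : V) : R := Num.sqrt (ip x x).

Definition converges_to (ip : V -> V -> R) (u : nat -> V) (x : V) : Prop :=
  forall eps : R, 0 < eps ->
    exists N : nat, forall n : nat, (N <= n)%N -> hnorm ip (u n - x) < eps.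

Definition cauchy_seq (ip : V -> V -> R) (u : nat -> V) : Prop :=
  forall eps : R, 0 < eps -> exists N : nat, forall n p : nat,
    (N <= n)%N -> (N <= p)%N -> hnorm ip (u n - u p) < eps.

Definition complete (ip : V -> V -> R) : Prop :=
  forall u : nat -> V, cauchy_seq ip u -> exists x, converges_to ip u x.

Definition hilbert_space (ip : V -> V -> R) : Prop :=
  inner_product ip /\ complete ip.

Definition subspace (D : V -> Prop) : Prop :=
  D 0 /\ forall (a : R) x y, D x -> D y -> D (a *: x + y).

Definition dense (ip : V -> V -> R) (D : V -> Prop) : Prop :=
  forall x (eps : R), 0 < eps -> exists y, D y /\ hnorm ip (x - y) < eps.

Definition sym_bilinear_on (D : V -> Prop) (q : V -> V -> R) : Prop :=
  (forall x y, D x -> D y -> q x y = q y x) /\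
  (forall a x y z, D x -> D y -> D z -> q (a *: x + y) z = a * q x z + q y z).

Definition semibounded_below (ip : V -> V -> R) (D : V -> Prop)
  (q : V -> V -> R) : Prop :=
  exists c : R, forall u, D u -> c * ip u u <= q u u.

Definition closed_form (ip : V -> V -> R) (D : V -> Prop)
  (q : V -> V -> R) : Prop :=
  forall (u : nat -> V) (x : V), (forall n, D (u n)) -> converges_to ip u x ->
    (forall eps : R, 0 < eps -> exists N : nat, forall n p : nat,
        (N <= n)%N -> (N <= p)%N -> q (u n - u p) (u n - u p) < eps) ->
    D x /\ (forall eps : R, 0 < eps -> exists N : nat, forall n : nat,
        (N <= n)%N -> q (u n - x) (u n - x) < eps).

(* orthonormal basis (g_i)_{i >= 1}, indexed from 1 as in the paper *)
Definition orthonormal_basis (ip : V -> V -> R) (g : nat -> V) : Prop :=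
  (forall i j : nat, (1 <= i)%N -> (1 <= j)%N -> ip (g i) (g j) = (i == j)%:R) /\
  (forall x, converges_to ip (fun n => \sum_(1 <= i < n) ip x (g i) *: g i) x).

Definition form_eigvec (ip : V -> V -> R) (D : V -> Prop) (q : V -> V -> R)
  (v : V) (lam : R) : Prop :=
  D v /\ forall phi, D phi -> q v phi = lam * ip v phi.

Definition proj_span (ip : V -> V -> R) (g : nat -> V) (N m : nat) (x : V) : V :=
  \sum_(N <= i < N + m) ip x (g i) *: g i.

Definition span_fam (m : nat) (f : 'I_m -> V) (x : V) : Prop :=
  exists c : 'I_m -> R, x = \sum_(j < m) c j *: f j.

End HilbertDefs.

(* Main.v *)
Require Import Defs.
From HB Require Import structures.
From mathcomp Require Import all_boot all_order all_algebra.
From mathcomp Require Import reals.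
From mathcomp Require Import ring lra zify.
Import Order.TTheory GRing.Theory Num.Theory.
Set Implicit Arguments.
Unset Strict Implicit.
Unset Printing Implicit Defensive.
Local Open Scope ring_scope.

Lemma ip0l (R : realType) (V : lmodType R) (ip : V -> V -> R) :
  inner_product ip -> forall z, ip 0 z = 0.
Proof.
case=> _ hl _ z; have := hl 1 0 0 z; rewrite scale1r addr0 mul1r => h.
lra.
Qed.

Lemma ipDl (R : realType) (V : lmodType R) (ip : V -> V -> R) :
  inner_product ip -> forall x y z, ip (x + y) z = ip x z + ip y z.
Proof. move=> h x y z; case: (h) => _ hl _; by rewrite -(scale1r x) hl mul1r scale1r. Qed.

Lemma ipZl (R : realType) (V : lmodType R) (ip : V -> V -> R) :
  inner_product ip -> forall a x z, ip (a *: x) z = a * ip x z.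
Proof. move=> h a x z; case: (h) => _ hl _; by rewrite -(addr0 (a *: x)) hl ip0l // addr0. Qed.

Lemma ipNl (R : realType) (V : lmodType R) (ip : V -> V -> R) :
  inner_product ip -> forall x z, ip (- x) z = - ip x z.
Proof. move=> h x z; by rewrite -scaleN1r ipZl // mulN1r. Qed.

Lemma ipBl (R : realType) (V : lmodType R) (ip : V -> V -> R) :
  inner_product ip -> forall x y z, ip (x - y) z = ip x z - ip y z.
Proof. move=> h x y z; by rewrite ipDl // ipNl. Qed.

Lemma ipC (R : realType) (V : lmodType R) (ip : V -> V -> R) :
  inner_product ip -> forall x y, ip x y = ip y x.
Proof. by case. Qed.

Lemma ip_ge0 (R : realType) (V : lmodType R) (ip : V -> V -> R) :
  inner_product ip -> forall x, 0 <= ip x x.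
Proof.
move=> h x; case: (eqVneq x 0) => [->|nz]; first by rewrite ip0l.
by case: h => _ _ /(_ x nz) /ltW.
Qed.

Lemma hnorm_sq (R : realType) (V : lmodType R) (ip : V -> V -> R) :
  inner_product ip -> forall x, hnorm ip x ^+ 2 = ip x x.
Proof. move=> h x; by rewrite /hnorm sqr_sqrtr // ip_ge0. Qed.

Lemma hnorm_ge0 (R : realType) (V : lmodType R) (ip : V -> V -> R) x :
  0 <= hnorm ip x.
Proof. exact: sqrtr_ge0. Qed.

Lemma ip_suml (R : realType) (V : lmodType R) (ip : V -> V -> R) (I : Type)
  (r : seq I) (a : I -> R) (v : I -> V) z :
  inner_product ip ->
  ip (\sum_(i <- r) a i *: v i) z = \sum_(i <- r) a i * ip (v i) z.
Proof.
move=> h; elim: r => [|x r IH]; first by rewrite !big_nil ip0l.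
by rewrite !big_cons ipDl // ipZl // IH.
Qed.

Lemma ip_sumr (R : realType) (V : lmodType R) (ip : V -> V -> R) (I : Type)
  (r : seq I) (a : I -> R) (v : I -> V) z :
  inner_product ip ->
  ip z (\sum_(i <- r) a i *: v i) = \sum_(i <- r) a i * ip z (v i).
Proof.
move=> h; rewrite ipC // ip_suml //; apply: eq_bigr => i _; by rewrite ipC.
Qed.

Lemma D_sum (R : realType) (V : lmodType R) (D : V -> Prop) (I : eqType)
  (r : seq I) (a : I -> R) (v : I -> V) :
  subspace D -> (forall i, i \in r -> D (v i)) -> D (\sum_(i <- r) a i *: v i).
Proof.
case=> D0 DD; elim: r => [|x r IH] Dv; first by rewrite big_nil.
rewrite big_cons; apply: DD; first by apply: Dv; rewrite inE eqxx.
by apply: IH => i ir; apply: Dv; rewrite inE ir orbT.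
Qed.

Lemma D_opp (R : realType) (V : lmodType R) (D : V -> Prop) x :
  subspace D -> D x -> D (- x).
Proof. case=> D0 DD Dx; rewrite -scaleN1r -[_ *: x]addr0; exact: DD. Qed.

Lemma D_add (R : realType) (V : lmodType R) (D : V -> Prop) x y :
  subspace D -> D x -> D y -> D (x + y).
Proof. case=> D0 DD Dx Dy; rewrite -(scale1r x); exact: DD. Qed.

Lemma q0l (R : realType) (V : lmodType R) (D : V -> Prop) q z :
  subspace D -> sym_bilinear_on D q -> D z -> q 0 z = 0.
Proof.
case=> D0 _ [_ hl] Dz; have := hl 1 0 0 z D0 D0 Dz; rewrite scale1r addr0 mul1r.
lra.
Qed.

Lemma qDl (R : realType) (V : lmodType R) (D : V -> Prop) q x y z :
  subspace D -> sym_bilinear_on D q -> D x -> D y -> D z ->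
  q (x + y) z = q x z + q y z.
Proof. move=> hD [_ hl] Dx Dy Dz; by rewrite -(scale1r x) hl // mul1r scale1r. Qed.

Lemma qZl (R : realType) (V : lmodType R) (D : V -> Prop) q a x z :
  subspace D -> sym_bilinear_on D q -> D x -> D z ->
  q (a *: x) z = a * q x z.
Proof.
move=> hD hq Dx Dz; case: (hD) => D0 _; case: (hq) => _ hl.
by rewrite -(addr0 (a *: x)) hl // (q0l hD hq) // addr0.
Qed.

Lemma qNl (R : realType) (V : lmodType R) (D : V -> Prop) q x z :
  subspace D -> sym_bilinear_on D q -> D x -> D z -> q (- x) z = - q x z.
Proof. move=> *; by rewrite -scaleN1r (qZl (D:=D)) // mulN1r. Qed.

Lemma q_suml (R : realType) (V : lmodType R) (D : V -> Prop) q (I : eqType)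
  (r : seq I) (a : I -> R) (v : I -> V) z :
  subspace D -> sym_bilinear_on D q -> (forall i, i \in r -> D (v i)) -> D z ->
  q (\sum_(i <- r) a i *: v i) z = \sum_(i <- r) a i * q (v i) z.
Proof.
move=> hD hq + Dz; elim: r => [|x r IH] Dv; first by rewrite !big_nil (q0l hD hq).
have Dvx : D (v x) by apply: Dv; rewrite inE eqxx.
have Dv' : forall i, i \in r -> D (v i) by move=> i ir; apply: Dv; rewrite inE ir orbT.
have Dx : D (a x *: v x) by case: hD => D0 DD; rewrite -[_ *: _]addr0; apply: DD.
rewrite !big_cons (qDl hD hq) //; last exact: D_sum.
by rewrite (qZl _ hD hq) // IH.
Qed.

Lemma on_ip_g (R : realType) (V : lmodType R) (ip : V -> V -> R) (g : nat -> V)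
  lo hi (a : nat -> R) k :
  inner_product ip ->
  (forall i j : nat, (1 <= i)%N -> (1 <= j)%N -> ip (g i) (g j) = (i == j)%:R) ->
  (1 <= lo)%N -> (lo <= k < hi)%N ->
  ip (\sum_(lo <= l < hi) a l *: g l) (g k) = a k.
Proof.
move=> hip hg hlo hk; rewrite ip_suml //.
rewrite (bigD1_seq k) ?mem_index_iota ?iota_uniq //=.
have k1 : (1 <= k)%N by case/andP: hk => h _; exact: leq_trans h.
rewrite hg // eqxx mulr1 big_seq_cond big1 ?addr0 // => l.
rewrite mem_index_iota => /andP [] /andP [] hl _ nlk.
by rewrite hg ?(leq_trans hlo hl) // (negbTE nlk) mulr0.
Qed.

Lemma on_ip_sum (R : realType) (V : lmodType R) (ip : V -> V -> R) (g : nat -> V)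
  lo hi (a b : nat -> R) :
  inner_product ip ->
  (forall i j : nat, (1 <= i)%N -> (1 <= j)%N -> ip (g i) (g j) = (i == j)%:R) ->
  (1 <= lo)%N ->
  ip (\sum_(lo <= l < hi) a l *: g l) (\sum_(lo <= l < hi) b l *: g l) =
  \sum_(lo <= l < hi) a l * b l.
Proof.
move=> hip hg hlo; rewrite ip_sumr //; apply: eq_big_nat => k hk.
by rewrite (on_ip_g a hip hg hlo hk) mulrC.
Qed.

Lemma pyth (R : realType) (V : lmodType R) (ip : V -> V -> R) (g : nat -> V)
  lo hi x :
  inner_product ip ->
  (forall i j : nat, (1 <= i)%N -> (1 <= j)%N -> ip (g i) (g j) = (i == j)%:R) ->
  (1 <= lo)%N ->
  ip (x - \sum_(lo <= l < hi) ip x (g l) *: g l) (x - \sum_(lo <= l < hi) ip x (g l) *: g l)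
  = ip x x - \sum_(lo <= l < hi) ip x (g l) ^+ 2.
Proof.
move=> hip hg hlo.
set s := \sum_(_ <= _ < _) _.
have h1 : ip s s = \sum_(lo <= l < hi) ip x (g l) ^+ 2.
  by rewrite /s on_ip_sum //; apply: eq_bigr => i _; rewrite expr2.
have h2 : ip x s = \sum_(lo <= l < hi) ip x (g l) ^+ 2.
  by rewrite /s ip_sumr //; apply: eq_bigr => i _; rewrite expr2.
rewrite ipBl // !(ipC hip _ (x - s)) !ipBl // (ipC hip s x) h1 h2; ring.
Qed.

Lemma on_ip_f (R : realType) (V : lmodType R) (ip : V -> V -> R) m (f : 'I_m -> V)
  (c : 'I_m -> R) k :
  inner_product ip ->
  (forall j k : 'I_m, ip (f j) (f k) = (j == k)%:R) ->
  ip (\sum_(j < m) c j *: f j) (f k) = c k.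
Proof.
move=> hip hf; rewrite ip_suml // (bigD1 k) //= hf eqxx mulr1 big1 ?addr0 // => j nj.
by rewrite hf (negbTE nj) mulr0.
Qed.

Lemma on_ip_fsum (R : realType) (V : lmodType R) (ip : V -> V -> R) m (f : 'I_m -> V)
  (c : 'I_m -> R) :
  inner_product ip ->
  (forall j k : 'I_m, ip (f j) (f k) = (j == k)%:R) ->
  ip (\sum_(j < m) c j *: f j) (\sum_(j < m) c j *: f j) = \sum_(j < m) c j ^+ 2.
Proof.
move=> hip hf; rewrite ip_sumr //; apply: eq_bigr => j _.
by rewrite on_ip_f // expr2.
Qed.


Lemma outside_big (R : realType) (nu : nat -> R) N m gamma k :
  (forall i j : nat, (1 <= i)%N -> (i <= j)%N -> nu i <= nu j) ->
  (0 < N)%N -> 0 < gamma -> gamma <= nu (N + m)%N -> ((2 <= N)%N -> nu N.-1 <= - gamma) ->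
  (1 <= k)%N -> ~~ (N <= k < N + m)%N -> gamma ^+ 2 <= nu k ^+ 2.
Proof.
move=> hmono hN hg hup hlow k1 nk.
case: (ltnP k N) => hkN.
  have N2 : (2 <= N)%N by apply: leq_ltn_trans hkN.
  have : nu k <= nu N.-1 by apply: hmono => //; rewrite -ltnS prednK // (ltn_trans _ N2).
  have := hlow N2 => *; nra.
have hk : (N + m <= k)%N by move: nk; rewrite hkN /= -leqNgt.
have : nu (N + m)%N <= nu k by apply: hmono => //; by rewrite (leq_trans hN) // leq_addr.
move=> *; nra.
Qed.

Lemma sq_bound (R : realType) (s a delta : R) :
  0 <= s -> 0 <= a -> 0 <= delta -> s <= delta * Num.sqrt a * Num.sqrt s ->
  s <= delta ^+ 2 * a.
Proof.
move=> s0 a0 d0 h.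
have u0 := sqrtr_ge0 a; have v0 := sqrtr_ge0 s.
have hu := sqr_sqrtr a0; have hv := sqr_sqrtr s0.
move: h u0 v0 hu hv.
set u := Num.sqrt a; set v := Num.sqrt s => h u0 v0 hu hv.
rewrite -hu -hv; rewrite -hv in h.
have : v <= delta * u.
  case: (eqVneq v 0) => [->|vn]; first by rewrite mulr_ge0.
  have vp : 0 < v by rewrite lt_def vn v0.
  rewrite -(ler_pM2r vp); by rewrite expr2 in h.
move=> hvu. 
have : v ^+ 2 <= (delta * u) ^+ 2 by rewrite ler_pXn2r // ?nnegrE ?mulr_ge0.
by rewrite exprMn => ->.
Qed.

Lemma stepA (R : realType) (V : lmodType R) (ip : V -> V -> R) (D : V -> Prop)
  (q : V -> V -> R) (g : nat -> V) (nu : nat -> R) (N m : nat) (delta : R) x n :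
  inner_product ip -> subspace D -> sym_bilinear_on D q ->
  (forall i j : nat, (1 <= i)%N -> (1 <= j)%N -> ip (g i) (g j) = (i == j)%:R) ->
  (forall i : nat, (1 <= i)%N -> form_eigvec ip D q (g i) (nu i)) ->
  0 <= delta -> D x ->
  (forall g0, D g0 -> `|q x g0| <= delta * hnorm ip x * hnorm ip g0) ->
  \sum_(1 <= k < n) (if (N <= k < N + m)%N then 0 else nu k * ip x (g k)) ^+ 2
    <= delta ^+ 2 * ip x x.
Proof.
move=> hip hD hq hg heig d0 Dx hH.
set w := fun k => if (N <= k < N + m)%N then 0 else nu k * ip x (g k).
set g0 := \sum_(1 <= k < n) w k *: g k.
have Dg : forall k, k \in index_iota 1 n -> D (g k).
  by move=> k; rewrite mem_index_iota => /andP [k1 _]; case: (heig k k1).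
have Dg0 : D g0 by apply: D_sum.
have hs : ip g0 g0 = \sum_(1 <= k < n) w k ^+ 2.
  by rewrite on_ip_sum //; apply: eq_bigr => k _; rewrite expr2.
have hqs : q x g0 = \sum_(1 <= k < n) w k ^+ 2.
  case: (hq) => hsym _; rewrite hsym // (q_suml _ hD hq) //.
  apply: eq_big_nat => k /andP [k1 _].
  case: (heig k k1) => _ ->; rewrite // (ipC hip) /w.
  by case: ifP => _; rewrite ?mul0r // expr2; ring.
have s0 : 0 <= \sum_(1 <= k < n) w k ^+ 2 by apply: sumr_ge0 => k _; exact: sqr_ge0.
apply: sq_bound => //; first exact: ip_ge0.
rewrite -{1}hqs -hs; apply: le_trans (ler_norm _) _; exact: hH.
Qed.

Lemma split_win (R : realType) (c : nat -> R) N m n :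
  (1 <= N)%N -> (N + m <= n)%N ->
  \sum_(1 <= k < n) c k =
  \sum_(N <= k < N + m) c k + \sum_(1 <= k < n) (if (N <= k < N + m)%N then 0 else c k).
Proof.
move=> hN hn.
have -> : \sum_(1 <= k < n) c k =
  \sum_(1 <= k < n) (if (N <= k < N + m)%N then c k else 0) +
  \sum_(1 <= k < n) (if (N <= k < N + m)%N then 0 else c k).
  by rewrite -big_split /=; apply: eq_bigr => k _; case: ifP; rewrite ?addr0 ?add0r.
congr (_ + _).
have hNm : (N <= N + m)%N by rewrite leq_addr.
rewrite (big_cat_nat hN (leq_trans hNm hn)) /= (big_cat_nat hNm hn) /=.
rewrite (eq_big_nat _ _ (F2 := fun => 0)); last first.
  by move=> k /andP [_ kN]; rewrite leqNgt kN.
rewrite big1_eq add0r.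
rewrite [X in _ + X](eq_big_nat _ _ (F2 := fun => 0)); last first.
  by move=> k /andP [kN _]; rewrite ltnNge kN andbF.
rewrite big1_eq addr0; apply: eq_big_nat => k ->; done.
Qed.

Lemma le_eps (R : realType) (X Y : R) : (forall e, 0 < e -> X <= Y + e) -> X <= Y.
Proof.
move=> h; rewrite leNgt; apply/negP => hXY.
have := h ((X - Y) / 2); rewrite divr_gt0 ?subr_gt0 //; move/(_ isT) => hh.
lra.
Qed.

Lemma core (R : realType) (V : lmodType R) (ip : V -> V -> R) (D : V -> Prop)
  (q : V -> V -> R) (g : nat -> V) (nu : nat -> R) (N m : nat) (gamma delta : R) x :
  inner_product ip -> subspace D -> sym_bilinear_on D q ->
  orthonormal_basis ip g ->
  (forall i : nat, (1 <= i)%N -> form_eigvec ip D q (g i) (nu i)) ->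
  (forall i j : nat, (1 <= i)%N -> (i <= j)%N -> nu i <= nu j) ->
  (0 < N)%N -> 0 < gamma -> gamma <= nu (N + m)%N -> ((2 <= N)%N -> nu N.-1 <= - gamma) ->
  0 <= delta -> D x ->
  (forall g0, D g0 -> `|q x g0| <= delta * hnorm ip x * hnorm ip g0) ->
  gamma ^+ 2 * ip (x - proj_span ip g N m x) (x - proj_span ip g N m x)
    <= delta ^+ 2 * ip x x.
Proof.
move=> hip hD hq [hg hconv] heig hmono hN hgam hup hlow d0 Dx hH.
rewrite /proj_span pyth //.
set a := ip x x; set W := \sum_(N <= l < N + m) _.
apply: le_eps => e e0.
have ee : 0 < e / gamma ^+ 2 by rewrite divr_gt0 // exprn_gt0.
case: (hconv x (Num.sqrt (e / gamma ^+ 2))); first by rewrite sqrtr_gt0.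
move=> N0 hN0; set n := maxn N0 (N + m).
have := hN0 n (leq_maxl _ _).
rewrite /hnorm ltr_sqrt // -opprB.
have -> : forall y : V, ip (- y) (- y) = ip y y.
  by move=> y; rewrite ipNl // (ipC hip y) ipNl // opprK.
rewrite pyth // -/a => hlt.
have := stepA N m n hip hD hq hg heig d0 Dx hH.
rewrite (split_win (fun k => ip x (g k) ^+ 2) hN (leq_maxr _ _)) in hlt.
set O := \sum_(1 <= k < n) _ in hlt.
move=> hs.
have hO : gamma ^+ 2 * O <= delta ^+ 2 * a.
  apply: le_trans hs; rewrite /O mulr_sumr; apply: ler_sum_nat => k /andP [k1 _].
  case: ifP => hk; first by rewrite mulr0 expr0n.
  rewrite exprMn ler_wpM2r ?sqr_ge0 //.
  by apply: (outside_big hmono hN hgam hup hlow k1); rewrite hk.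
have g2 : 0 < gamma ^+ 2 by rewrite exprn_gt0.
have : gamma ^+ 2 * (a - (W + O)) <= gamma ^+ 2 * (e / gamma ^+ 2).
  by rewrite ler_pM2l // ltW.
rewrite mulrCA divff ?mulr1 ?gt_eqF //.
lra.
Qed.

Lemma kernel_nz (F : fieldType) p r (M : 'M[F]_(p, r)) :
  (r < p)%N -> exists c : 'rV_p, c != 0 /\ c *m M = 0.
Proof.
move=> hrp.
have : kermx M != 0.
  rewrite -mxrank_eq0 mxrank_ker subn_eq0 -ltnNge.
  exact: leq_ltn_trans (rank_leq_col M) hrp.
case/rowV0Pn => v /sub_kermxP hv vn; by exists v.
Qed.

Lemma reindexN (R : realType) (F : nat -> R) N m :
  \sum_(N <= k < N + m) F k = \sum_(l < m) F (N + l)%N.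
Proof.
elim: m => [|m IH]; first by rewrite addn0 big_geq // big_ord0.
by rewrite addnS big_nat_recr ?leq_addr //= IH big_ord_recr.
Qed.

Lemma num_bound (R : realType) (Z s a b E gamma delta : R) :
  Z * b <= s * (a - b) + E -> `|s| <= delta -> gamma * E <= delta ^+ 2 * a ->
  gamma ^+ 2 * (a - b) <= delta ^+ 2 * a -> b <= a -> 2 * delta ^+ 2 < gamma ^+ 2 ->
  0 < gamma -> 0 < delta -> 0 < a -> Z <= 4 / gamma * delta ^+ 2.
Proof.
move=> h1 h2 h3 h4 h5 h6 g0 d0 a0.
have hdg : delta <= gamma.
  rewrite leNgt; apply/negP => hlt; have : gamma ^+ 2 < delta ^+ 2 by rewrite ltr_pXn2r ?nnegrE ?ltW.
  move=> q1; nra.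
have hab : a <= 2 * b by nra.
have b0 : 0 < b by nra.
have hs : s * (a - b) <= delta * (a - b) by apply: ler_wpM2r; [lra | exact: le_trans (ler_norm _) h2].
have k1 : gamma ^+ 2 * (s * (a - b)) <= gamma * delta ^+ 2 * a.
  apply: le_trans (_ : gamma ^+ 2 * (delta * (a - b)) <= _); first by rewrite ler_pM2l ?exprn_gt0.
  have : delta * (gamma ^+ 2 * (a - b)) <= delta * (delta ^+ 2 * a) by rewrite ler_pM2l.
  have : delta ^+ 3 * a <= gamma * delta ^+ 2 * a.
    rewrite ler_pM2r // exprSr mulrC ler_pM2r ?exprn_gt0 //.
  move=> q1 q2; rewrite expr2 in h4 *; rewrite exprSr expr2 in q2; nra.
have k2 : gamma ^+ 2 * E <= gamma * delta ^+ 2 * a.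
  rewrite expr2 -mulrA -mulrA ler_pM2l //; by rewrite mulrA.
have k3 : gamma ^+ 2 * (Z * b) <= 2 * gamma * delta ^+ 2 * a.
  apply: le_trans (_ : gamma ^+ 2 * (s * (a - b) + E) <= _); first by rewrite ler_pM2l ?exprn_gt0.
  rewrite mulrDr; lra.
have k4 : gamma * (gamma * Z) * b <= gamma * (4 * delta ^+ 2) * b.
  have : 2 * gamma * delta ^+ 2 * a <= 2 * gamma * delta ^+ 2 * (2 * b).
    by rewrite ler_pM2l // !mulr_gt0 ?exprn_gt0.
  move: k3; rewrite expr2 => q1 q2; nra.
have : gamma * Z <= 4 * delta ^+ 2.
  by move: k4; rewrite ler_pM2r // ler_pM2l.
move=> h; rewrite -(ler_pM2l g0).
have -> : gamma * (4 / gamma * delta ^+ 2) = 4 * delta ^+ 2.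
  by field; rewrite gt_eqF.
exact: h.
Qed.

Lemma facts (R : realType) (V : lmodType R) (ip : V -> V -> R) (D : V -> Prop)
  (q : V -> V -> R) (g : nat -> V) (nu : nat -> R) (N m : nat) (gamma delta : R) x :
  inner_product ip -> subspace D -> sym_bilinear_on D q ->
  orthonormal_basis ip g ->
  (forall i : nat, (1 <= i)%N -> form_eigvec ip D q (g i) (nu i)) ->
  (forall i j : nat, (1 <= i)%N -> (i <= j)%N -> nu i <= nu j) ->
  (0 < N)%N -> 0 < gamma -> gamma <= nu (N + m)%N -> ((2 <= N)%N -> nu N.-1 <= - gamma) ->
  0 <= delta -> D x ->
  (forall g0, D g0 -> `|q x g0| <= delta * hnorm ip x * hnorm ip g0) ->
  [/\ ip (proj_span ip g N m x) (proj_span ip g N m x) = \sum_(l < m) ip x (g (N + l)%N) ^+ 2,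
      q (proj_span ip g N m x) (proj_span ip g N m x) =
        \sum_(l < m) nu (N + l)%N * ip x (g (N + l)%N) ^+ 2,
      gamma * `|q x x - q (proj_span ip g N m x) (proj_span ip g N m x)| <= delta ^+ 2 * ip x x,
      gamma ^+ 2 * (ip x x - ip (proj_span ip g N m x) (proj_span ip g N m x)) <= delta ^+ 2 * ip x x &
      ip (proj_span ip g N m x) (proj_span ip g N m x) <= ip x x].
Proof.
move=> hip hD hq hob heig hmono hN hgam hup hlow d0 Dx hH.
have hcore := core hip hD hq hob heig hmono hN hgam hup hlow d0 Dx hH.
case: hob => hg hconv.
have hpy := pyth (N + m)%N x hip hg hN.
rewrite -/(proj_span ip g N m x) in hpy.
set P := proj_span ip g N m x in hcore hpy *.
set r := x - P in hcore hpy.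
have hPP : ip P P = \sum_(N <= k < N + m) ip x (g k) ^+ 2.
  by rewrite /P /proj_span on_ip_sum //; apply: eq_bigr => k _; rewrite expr2.
have Dg : forall k, k \in index_iota N (N + m) -> D (g k).
  move=> k; rewrite mem_index_iota => /andP [hk _].
  by case: (heig k (leq_trans hN hk)).
have DP : D P by apply: D_sum.
have Dr : D r by apply: D_add => //; apply: D_opp.
have rr0 := ip_ge0 hip r.
have hrr : ip r r = ip x x - ip P P by rewrite hpy hPP.
split.
- by rewrite hPP reindexN.
- rewrite {1}/P /proj_span (q_suml _ hD hq) // -(reindexN (fun k => nu k * ip x (g k) ^+ 2)).
  apply: eq_big_nat => k hk; have k1 := leq_trans hN (proj1 (andP hk)).
  case: (heig k k1) => _ ->; rewrite // (ipC hip (g k) P) /P /proj_span on_ip_g //; ring.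
- have hqPr : q P r = 0.
    rewrite {1}/P /proj_span (q_suml _ hD hq) // big1_seq // => k /andP [] _.
    rewrite mem_index_iota => hk; have k1 := leq_trans hN (proj1 (andP hk)).
    case: (heig k k1) => _ ->; rewrite // (ipC hip (g k) r) /r ipBl // /P /proj_span on_ip_g //.
    by rewrite subrr !mulr0.
  case: (hq) => hsym _.
  have -> : q x x - q P P = q x r.
    have ex : x = P + r by rewrite /r addrC subrK.
    rewrite {1}ex (qDl hD hq) // hsym // {1}ex (qDl hD hq) // hsym // hqPr hsym //; ring.
  have hr : gamma * hnorm ip r <= delta * hnorm ip x.
    rewrite /hnorm -(ger0_norm (ltW hgam)) -(ger0_norm d0) -!sqrtr_sqr -!sqrtrM ?sqr_ge0 //.
    rewrite ler_sqrt //; by rewrite mulr_ge0 ?sqr_ge0 ?ip_ge0.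
  apply: le_trans (_ : gamma * (delta * hnorm ip x * hnorm ip r) <= _).
    by rewrite ler_pM2l //; apply: hH.
  rewrite mulrCA -mulrA; apply: le_trans (_ : delta * hnorm ip x * (delta * hnorm ip x) <= _).
    by rewrite mulrA ler_wpM2l ?mulr_ge0 ?hnorm_ge0.
  by rewrite -(hnorm_sq hip x) expr2 [in X in _ <= X]expr2; rewrite le_eqVlt; apply/orP; left; apply/eqP; ring.
- by rewrite -hrr.
- lra.
Qed.

Lemma rv_nz (R : realType) m (c : 'rV[R]_m) : c != 0 -> exists j, c 0 j != 0.
Proof.
move=> cn; case: (pickP (fun j => c 0 j != 0)) => [j hj|h]; first by exists j.
move/eqP: cn; case; apply/rowP => j; rewrite mxE; by move/negbFE/eqP: (h j).
Qed.

Lemma sumsq_gt0 (R : realType) m (c : 'I_m -> R) j : c j != 0 -> 0 < \sum_(k < m) c k ^+ 2.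
Proof.
move=> cj; rewrite (bigD1 j) //=; apply: lt_le_trans (_ : c j ^+ 2 <= _).
  by rewrite lt_def sqrf_eq0 cj sqr_ge0.
by rewrite lerDl sumr_ge0 // => k _; rewrite sqr_ge0.
Qed.

Lemma span_f (R : realType) (V : lmodType R) m (f : 'I_m -> V) i : span_fam f (f i).
Proof.
exists (fun j => (j == i)%:R); rewrite (bigD1 i) //= eqxx scale1r big1 ?addr0 // => j /negbTE ->.
by rewrite scale0r.
Qed.

Lemma span_c (R : realType) (V : lmodType R) m (f : 'I_m -> V) c : span_fam f (\sum_(j < m) c j *: f j).
Proof. by exists c. Qed.

Lemma ipNN (R : realType) (V : lmodType R) (ip : V -> V -> R) x y :
  inner_product ip -> ip (y - x) (y - x) = ip (x - y) (x - y).
Proof. move=> hip; by rewrite -opprB ipNl // (ipC hip (x - y)) ipNl // opprK. Qed.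
Unset Implicit Arguments.

Theorem proposition3p1 (R : realType) (V : lmodType R)
  (ip : V -> V -> R) (D : V -> Prop) (q : V -> V -> R)
  (g : nat -> V) (nu : nat -> R) (N m : nat)
  (f : 'I_m -> V) (xi : 'I_m -> R) (gamma delta : R) :
  hilbert_space ip -> subspace D -> dense ip D ->
  sym_bilinear_on D q -> semibounded_below ip D q -> closed_form ip D q ->
  orthonormal_basis ip g ->
  (forall i : nat, (1 <= i)%N -> form_eigvec ip D q (g i) (nu i)) ->
  (forall i j : nat, (1 <= i)%N -> (i <= j)%N -> nu i <= nu j) ->
  (forall M : R, exists i : nat, M < nu i) ->
  (0 < N)%N -> (0 < m)%N ->
  (forall j : 'I_m, D (f j)) ->
  (forall j k : 'I_m, ip (f j) (f k) = (j == k)%:R) ->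
  (forall (j : 'I_m) (phi : V), span_fam f phi -> q (f j) phi = xi j * ip (f j) phi) ->
  (forall j k : 'I_m, (j <= k)%N -> xi j <= xi k) ->
  0 < delta -> delta < gamma / Num.sqrt 2 ->
  (forall i : 'I_m, `|nu (N + i)%N| <= gamma) ->
  gamma <= nu (N + m)%N ->
  ((2 <= N)%N -> nu N.-1 <= - gamma) ->
  (forall (g0 phi : V), D g0 -> span_fam f phi ->
     `|q phi g0| <= delta * hnorm ip phi * hnorm ip g0) ->
  (forall i : 'I_m, `|nu (N + i)%N - xi i| <= 4 / gamma * delta ^+ 2) /\
  (forall phi : V, span_fam f phi ->
     hnorm ip (proj_span ip g N m phi - phi) <= Num.sqrt 2 * delta / gamma * hnorm ip phi).
Proof.
move=> [hip _] hD _ hq _ _ hob heig hmono _ hN hm Df hf hxi hxim d0 hdg _ hup hlow hH3.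
have s2 : 0 < Num.sqrt 2 :> R by rewrite sqrtr_gt0.
have s22 : Num.sqrt 2 ^+ 2 = 2 :> R by rewrite sqr_sqrtr.
have hgam : 0 < gamma.
  have : 0 < gamma / Num.sqrt 2 by apply: lt_trans hdg.
  move=> hh; have := mulr_gt0 hh s2; by rewrite divfK ?gt_eqF.
have h2 : 2 * delta ^+ 2 < gamma ^+ 2.
  have : delta ^+ 2 < (gamma / Num.sqrt 2) ^+ 2.
    move: hdg; set cc := gamma / Num.sqrt 2 => hdg; rewrite !expr2; nra.
  rewrite expr_div_n s22 => hh.
  have := hh; rewrite ltr_pdivlMr // => hh2; lra.
have spanD : forall phi, span_fam f phi -> D phi.
  by move=> phi [c ->]; apply: D_sum.
have hH : forall phi, span_fam f phi ->
    forall g0, D g0 -> `|q phi g0| <= delta * hnorm ip phi * hnorm ip g0.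
  by move=> phi sp g0 Dg0; apply: hH3.
split; last first.
  move=> phi sp.
  have hc := core hip hD hq hob heig hmono hN hgam hup hlow (ltW d0) (spanD _ sp) (hH _ sp).
  set r := phi - proj_span ip g N m phi in hc.
  have hr : gamma * hnorm ip r <= delta * hnorm ip phi.
    rewrite /hnorm -(ger0_norm (ltW hgam)) -(ger0_norm (ltW d0)) -!sqrtr_sqr -!sqrtrM ?sqr_ge0 //.
    rewrite ler_sqrt //; by rewrite mulr_ge0 ?sqr_ge0 ?ip_ge0.
  rewrite /hnorm ipNN // -/(hnorm ip r) -/(hnorm ip phi).
  rewrite -(ler_pM2l hgam).
  have -> : gamma * (Num.sqrt 2 * delta / gamma * hnorm ip phi) = Num.sqrt 2 * (delta * hnorm ip phi).
    by field; rewrite gt_eqF.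
  apply: le_trans hr _; apply: ler_peMl; first by rewrite mulr_ge0 ?hnorm_ge0 ?ltW.
  by rewrite -[X in X <= _]sqrtr1 ler_sqrt // ler1n.
have gen : forall (c : 'I_m -> R) (Z s : R) (j0 : 'I_m) phi,
    phi = \sum_(j < m) c j *: f j -> c j0 != 0 ->
    Z * ip (proj_span ip g N m phi) (proj_span ip g N m phi) <=
      s * (ip phi phi - ip (proj_span ip g N m phi) (proj_span ip g N m phi)) +
      `|q phi phi - q (proj_span ip g N m phi) (proj_span ip g N m phi)| ->
    `|s| <= delta -> Z <= 4 / gamma * delta ^+ 2.
  move=> c Z s j0 phi ephi cj0 hZ hs.
  have sp : span_fam f phi by rewrite ephi; exact: span_c.
  have [_ _ h3 h4 h5] := facts hip hD hq hob heig hmono hN hgam hup hlow (ltW d0) (spanD _ sp) (hH _ sp).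
  have a0 : 0 < ip phi phi by rewrite ephi on_ip_fsum //; exact: sumsq_gt0 cj0.
  exact: num_bound hZ hs h3 h4 h5 h2 hgam d0 a0.
have hxiabs : forall i, `|xi i| <= delta.
  move=> i; have := hH _ (span_f f i) (f i) (Df i).
  rewrite hxi; last exact: span_f.
  by rewrite hf eqxx mulr1 /hnorm hf eqxx sqrtr1 !mulr1.
move=> i.
have mm : (m.-1 < m)%N by lia.
have hi := ltn_ord i.
have Dfi : forall j : 'I_m, j \in index_enum 'I_m -> D (f j) by move=> j _; exact: Df.
have hE : forall x y : R, x - y <= `|x - y| /\ y - x <= `|x - y|.
  by move=> x y; split; [exact: ler_norm | rewrite -normrN opprB; exact: ler_norm].
have upper : nu (N + i)%N - xi i <= 4 / gamma * delta ^+ 2.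
  pose M1 := \matrix_(j < m, l < m.-1)
    (if (l < i)%N then ip (f j) (g (N + l)%N) else ((j : nat) == l.+1)%:R).
  have [c [cn hc]] := kernel_nz M1 mm.
  have [j0 hj0] := rv_nz cn.
  have eqs : forall l : 'I_m.-1, \sum_(j < m) c 0 j *
      (if (l < i)%N then ip (f j) (g (N + l)%N) else ((j : nat) == l.+1)%:R) = 0.
    move=> l; move: (congr1 (fun A : 'M[R]_(1, m.-1) => A 0 l) hc) => /=.
    rewrite !mxE /M1 => h; apply: etrans _ h; apply: eq_bigr => j _; by rewrite mxE.
  set phi := \sum_(j < m) c 0 j *: f j.
  have U1 : forall k : 'I_m, (i < k)%N -> c 0 k = 0.
    move=> k ik; have kl : (k.-1 < m.-1)%N by have := ltn_ord k; lia.
    have hk : (k.-1 < i)%N = false by apply/negbTE; rewrite -leqNgt; lia.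
    have := eqs (Ordinal kl); rewrite /= hk prednK; last by lia.
    rewrite (bigD1 k) //= eqxx mulr1 big1 ?addr0 // => j nj.
    by have /negbTE -> : (j : nat) != k by []; rewrite mulr0.
  have U2 : forall l : nat, (l < i)%N -> ip phi (g (N + l)%N) = 0.
    move=> l li; have ll : (l < m.-1)%N by lia.
    have := eqs (Ordinal ll); rewrite /= li /phi ip_suml //.
  have hQ : q phi phi = \sum_(j < m) c 0 j ^+ 2 * xi j.
    rewrite {1}/phi (q_suml _ hD hq) //; last exact: spanD (span_c f _).
    apply: eq_bigr => j _; rewrite hxi; last exact: span_c.
    rewrite (ipC hip (f j) phi) /phi on_ip_f //; ring.
  have ha : ip phi phi = \sum_(j < m) c 0 j ^+ 2 by rewrite /phi on_ip_fsum.
  have [hb hqp _ _ _] := facts (x := phi) hip hD hq hob heig hmono hN hgam hup hlow (ltW d0)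
     (spanD _ (span_c f _)) (hH _ (span_c f _)).
  set P := proj_span ip g N m phi in hb hqp *.
  have hQle : q phi phi <= xi i * ip phi phi.
    rewrite hQ ha mulr_sumr; apply: ler_sum => j _; case: (leqP j i) => hji.
      by rewrite [X in _ <= X]mulrC ler_wpM2l ?sqr_ge0 // hxim.
    by rewrite U1 // expr2 !mul0r mulr0.
  have hQPge : nu (N + i)%N * ip P P <= q P P.
    rewrite hb hqp mulr_sumr; apply: ler_sum => l _; case: (ltnP l i) => hli.
      by rewrite U2 // expr2 !mulr0.
    by rewrite ler_wpM2r ?sqr_ge0 // hmono // ?leq_add2l //; lia.
  apply: (gen (fun j => c 0 j) _ (xi i) j0 phi) => //.
  have [e1 e2] := hE (q phi phi) (q P P).
  lra.
have lower : xi i - nu (N + i)%N <= 4 / gamma * delta ^+ 2.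
  pose M1 := \matrix_(j < m, l < m.-1)
    (if (l < i)%N then ((j : nat) == l)%:R else ip (f j) (g (N + l.+1)%N)).
  have [c [cn hc]] := kernel_nz M1 mm.
  have [j0 hj0] := rv_nz cn.
  have eqs : forall l : 'I_m.-1, \sum_(j < m) c 0 j *
      (if (l < i)%N then ((j : nat) == l)%:R else ip (f j) (g (N + l.+1)%N)) = 0.
    move=> l; move: (congr1 (fun A : 'M[R]_(1, m.-1) => A 0 l) hc) => /=.
    rewrite !mxE /M1 => h; apply: etrans _ h; apply: eq_bigr => j _; by rewrite mxE.
  set phi := \sum_(j < m) c 0 j *: f j.
  have L1 : forall k : 'I_m, (k < i)%N -> c 0 k = 0.
    move=> k ki; have kl : (k < m.-1)%N by lia.
    have := eqs (Ordinal kl); rewrite /= ki.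
    rewrite (bigD1 k) //= eqxx mulr1 big1 ?addr0 // => j nj.
    by have /negbTE -> : (j : nat) != k by []; rewrite mulr0.
  have L2 : forall l : nat, (i < l)%N -> (l < m)%N -> ip phi (g (N + l)%N) = 0.
    move=> l il lm; have ll : (l.-1 < m.-1)%N by lia.
    have hk : (l.-1 < i)%N = false by apply/negbTE; rewrite -leqNgt; lia.
    have := eqs (Ordinal ll); rewrite /= hk prednK; last by lia.
    by rewrite /phi ip_suml.
  have hQ : q phi phi = \sum_(j < m) c 0 j ^+ 2 * xi j.
    rewrite {1}/phi (q_suml _ hD hq) //; last exact: spanD (span_c f _).
    apply: eq_bigr => j _; rewrite hxi; last exact: span_c.
    rewrite (ipC hip (f j) phi) /phi on_ip_f //; ring.
  have ha : ip phi phi = \sum_(j < m) c 0 j ^+ 2 by rewrite /phi on_ip_fsum.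
  have [hb hqp _ _ _] := facts (x := phi) hip hD hq hob heig hmono hN hgam hup hlow (ltW d0)
     (spanD _ (span_c f _)) (hH _ (span_c f _)).
  set P := proj_span ip g N m phi in hb hqp *.
  have hQge : xi i * ip phi phi <= q phi phi.
    rewrite hQ ha mulr_sumr; apply: ler_sum => j _; case: (ltnP j i) => hji.
      by rewrite L1 // expr2 !mul0r mulr0.
    by rewrite [X in X <= _]mulrC ler_wpM2l ?sqr_ge0 // hxim.
  have hQPle : q P P <= nu (N + i)%N * ip P P.
    rewrite hb hqp mulr_sumr; apply: ler_sum => l _; case: (leqP l i) => hli.
      by rewrite ler_wpM2r ?sqr_ge0 //; apply: hmono; [rewrite addn_gt0 hN | rewrite leq_add2l].
    by rewrite L2 // expr2 !mulr0.
  apply: (gen (fun j => c 0 j) _ (- xi i) j0 phi) => //; last by rewrite normrN.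
  have [e1 e2] := hE (q phi phi) (q P P).
  lra.
by rewrite ler_norml upper andbT lerNl opprB.
Qed.
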